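(* Let $\mathcal{X}$ be an instance space and $\mathcal{Y}$ a finite label set. Let $\hat f:\mathcal{X}\to\mathbb{P}(\mathcal{Y})$ be a fixed probabilistic classifier (e.g. trained on a separate proper training set, independent of the data below), and write $\hat f(x)_y$ for the probability it assigns to label $y$ at $x$. Let $(x_j,y_j)$, $j\in\mathcal{I}_2$, be calibration points, each observed only through a candidate set $S_j\subseteq\mathcal{Y}$ with $y_j\in S_j$, and let $(x_{new},y_{new})$ be a test point. Define the multiset of scores $$\mathcal{E}_{\max}:=\Big\{\,1-\min_{y\in S_j}\hat f(x_j)_y : j\in\mathcal{I}_2\Big\}.$$ If the points $\{(x_j,y_j):j\in\mathcal{I}_2\}\cup\{(x_{new},y_{new})\}$ are exchangeable, then for every $\epsilon\in(0,1]$, $$\mathbb{P}\big(y_{new}\in\mathcal{T}(x_{new},\hat f,\mathcal{E}_{\max},\epsilon)\big)\ge 1-\epsilon .$$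
   Context: For a finite multiset $\mathcal{E}$ of real numbers and $\epsilon\in(0,1]$, the critical score $q(\mathcal{E},\epsilon)$ is the $\lceil(1+|\mathcal{E}|)(1-\epsilon)\rceil$-th smallest element of $\mathcal{E}$ (counted with multiplicity); if this index exceeds $|\mathcal{E}|$, $q(\mathcal{E},\epsilon)$ is taken to be $+\infty$. For $x\in\mathcal{X}$, the prediction set is $\mathcal{T}(x,\hat f,\mathcal{E},\epsilon):=\{y\in\mathcal{Y}:\hat f(x)_y\ge 1-q(\mathcal{E},\epsilon)\}$. *)

(* Defs.v *)
From HB Require Import structures.
From mathcomp Require Import all_boot all_order all_algebra perm.
From mathcomp Require Import all_classical all_reals all_analysis.
Set Implicit Arguments. Unset Strict Implicit. Unset Printing Implicit Defensive.
Import Order.TTheory GRing.Theory Num.Theory.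
Local Open Scope classical_set_scope.
Local Open Scope ring_scope.

Definition crit_index (R : realType) (m : nat) (eps : R) : int :=
  Num.ceil ((1 + m%:R) * (1 - eps)).

(* q(E, eps): the k-th smallest element of E (with multiplicity), +oo if
   k > |E|.  (k <= 0 only happens for eps = 1; convention: -oo there.) *)
Definition critical_score (R : realType) (E : seq R) (eps : R) : \bar R :=
  let k := crit_index (size E) eps in
  if (k <= 0)%R then -oo%E
  else if (size E < `|k|)%N then +oo%E
  else ((sort <=%R E)`_(`|k|.-1))%:E.

Definition conf_set (R : realType) (X : Type) (Y : finType)
  (f : X -> Y -> R) (x : X) (E : seq R) (eps : R) : {set Y} :=
  [set y | (1%:E - critical_score E eps <= (f x y)%:E)%E].

(* min over a (nonempty) set of labels of f(x)_y; since f(x) is a probability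
   vector (values <= 1), the neutral element 1 does not affect the minimum. *)
Definition min_on (R : realType) (X : Type) (Y : finType)
  (f : X -> Y -> R) (x : X) (S : {set Y}) : R :=
  \big[Num.min/1]_(y in S) f x y.

Definition E_max (R : realType) (X : Type) (Y : finType) (n : nat)
  (f : X -> Y -> R) (xc : 'I_n -> X) (S : 'I_n -> {set Y}) : seq R :=
  [seq 1 - min_on f (xc j) (S j) | j <- enum 'I_n].

(* Exchangeability of the random points (x_i, y_i), i < N: the joint law is
   invariant under every permutation of the indices, expressed as equality of
   the laws on the generating pi-system of measurable rectangles
   prod_i (A_i x B_i) of the product sigma-algebra (Y carries the discrete
   sigma-algebra). *)
Definition exchangeable d (Omega : measurableType d) (R : realType)
  (P : probability Omega R) dX (X : measurableType dX) (Y : finType) (N : nat)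
  (x : 'I_N -> Omega -> X) (y : 'I_N -> Omega -> Y) : Prop :=
  forall (s : {perm 'I_N}) (A : 'I_N -> set X) (B : 'I_N -> set Y),
    (forall i, measurable (A i)) ->
    P (\bigcap_(i in [set: 'I_N]) [set w | A i (x (s i) w) /\ B i (y (s i) w)])
    = P (\bigcap_(i in [set: 'I_N]) [set w | A i (x i w) /\ B i (y i w)]).

(* Main.v *)
Require Import Defs.
From HB Require Import structures.
From mathcomp Require Import all_boot all_order all_algebra perm.
From mathcomp Require Import all_classical all_reals all_analysis.
From mathcomp Require Import measurable_realfun lra.
Import Order.TTheory GRing.Theory Num.Theory.
Local Open Scope ring_scope.

Lemma cnt (n : nat) (P : pred 'I_n) : count P (enum 'I_n) = #|[set j | P j]|.
Proof.
rewrite cardE /enum_mem size_filter count_filter; apply: eq_count => j.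
by rewrite !inE andbT.
Qed.

Lemma bigmin_le_mem (R : realType) (I : eqType) (r : seq I) (P : pred I)
  (F : I -> R) (x0 : R) i :
  i \in r -> P i -> \big[Num.min/x0]_(j <- r | P j) F j <= F i.
Proof.
elim: r => // a r IH; rewrite inE big_cons => /orP[/eqP <-|ir] Pi.
  by rewrite Pi ge_min lexx.
by case: (P a); rewrite ?ge_min IH ?orbT.
Qed.
Lemma sort_count (R : realType) (s : seq R) (K : nat) (t : R) :
  (0 < K <= size s)%N ->
  (t <= (sort <=%R s)`_K.-1) = (count (fun v : R => (v < t)%R) s < K)%N.
Proof.
move=> /andP[K0 Ks].
set s' := sort <=%R s.
have ss : sorted <=%R s' by apply: sort_sorted; exact: le_total.
have sz : size s' = size s by rewrite size_sort.
have -> : count (fun v => v < t) s = count (fun v => v < t) s'.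
  have hp : perm_eq s' s by rewrite /s' perm_sort.
  by rewrite (seq.permP hp).
have mono : forall i j, (i <= j)%N -> (j < size s')%N -> s'`_i <= s'`_j.
  move=> i j ij js; apply: (le_sorted_leq_nth 0 ss) => //; rewrite inE.
    exact: leq_ltn_trans ij js.
rewrite -[in count _ s'](mkseq_nth 0 s') count_map.
have Ks' : (K <= size s')%N by rewrite sz.
have K1s : (K.-1 < size s')%N by rewrite prednK.
case: (lerP t s'`_K.-1) => htK; apply/esym.
- rewrite -(subnKC (ltnW K1s)) /mkseq iotaD count_cat add0n.
  have -> : count (preim (nth 0 s') (fun v : R => v < t)) (iota K.-1 (size s' - K.-1)) = 0%N.
    apply/eqP; rewrite -leqn0 leqNgt -has_count; apply/hasP => -[j].
    rewrite mem_iota => /andP[jl ju] /=; rewrite subnKC ?(ltnW K1s) // in ju.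
    by apply/negP; rewrite -leNgt (le_trans htK) // mono.
  rewrite addn0; apply: leq_ltn_trans (count_size _ _) _.
  by rewrite size_iota prednK.
- apply/negbTE; rewrite -leqNgt.
  rewrite -(subnKC Ks') /mkseq iotaD count_cat add0n.
  apply: leq_trans (leq_addr _ _).
  rewrite (@eq_in_count _ _ predT); first by rewrite count_predT size_iota.
  move=> j; rewrite mem_iota add0n => /andP[_ jK] /=.
  apply: le_lt_trans htK; apply: mono; last by rewrite prednK.
  by rewrite -ltnS prednK.
Qed.
Lemma many_small (R : realType) (N K : nat) (r : 'I_N -> R) : (K <= N)%N ->
  (K <= #|[set i : 'I_N | (#|[set j : 'I_N | (r j < r i)%R]| < K)%N]|)%N.
Proof.
move=> KN; set I := [set i | _]; rewrite leqNgt; apply/negP => IK.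
have : (0 < #|~: I|)%N.
  by rewrite -(ltn_add2l #|I|) addn0 cardsC card_ord (leq_trans IK).
case/card_gt0P => i0 i0I.
case: (arg_minP r i0I) => i iI imin.
have : i \in I.
  rewrite inE; apply: leq_ltn_trans IK; apply: subset_leq_card.
  apply/fintype.subsetP => j; rewrite inE => rji; apply/negPn/negP => jI.
  have jI' : j \in ~: I by rewrite inE.
  by have := imin j jI'; rewrite leNgt rji.
by move=> iI2; have : i \in ~: I := iI; rewrite finset.in_setC iI2.
Qed.

Local Open Scope classical_set_scope.
Lemma fiber_meas d (Om : measurableType d) (T : finType) (g : Om -> T) :
  (forall t, measurable [set w | g w = t]) ->
  forall Q : T -> bool, measurable [set w | Q (g w)].
Proof.
move=> hg Q.
have -> : [set w | Q (g w)] = \bigcup_(t in [set t | Q t]) [set w | g w = t].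
  by apply/seteqP; split => [w /= Qw|w [t /= Qt ->]] //; exists (g w).
by apply: fin_bigcup_measurable => //; exact: finite_finset.
Qed.

Lemma fin_bigcapI d (Om : measurableType d) (I : finType) (F : I -> set Om) :
  (forall i, measurable (F i)) -> measurable (\bigcap_(i in [set: I]) F i).
Proof. by move=> h; apply: fin_bigcap_measurable => //; exact: finite_finset. Qed.

Lemma ffun_fiber d (Om : measurableType d) (I : finType) (T : finType)
  (g : I -> Om -> T) :
  (forall i t, measurable [set w | g i w = t]) ->
  forall t : {ffun I -> T}, measurable [set w | [ffun i => g i w] = t].
Proof.
move=> hg t.
have -> : [set w | [ffun i => g i w] = t] = \bigcap_(i in [set: I]) [set w | g i w = t i].
  apply/seteqP; split => [w /= <- i _|w /= h]; first by rewrite ffunE.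
  by apply/ffunP => i; rewrite ffunE h.
exact: fin_bigcapI.
Qed.

Lemma pair_fiber d (Om : measurableType d) (T1 T2 : finType)
  (g1 : Om -> T1) (g2 : Om -> T2) :
  (forall t, measurable [set w | g1 w = t]) ->
  (forall t, measurable [set w | g2 w = t]) ->
  forall t, measurable [set w | (g1 w, g2 w) = t].
Proof.
move=> h1 h2 [t1 t2].
have -> : [set w | (g1 w, g2 w) = (t1, t2)] = [set w | g1 w = t1] `&` [set w | g2 w = t2].
  by apply/seteqP; split => [w /= [-> ->]|w /= [-> ->]].
exact: measurableI.
Qed.

Lemma bool_fiber d (Om : measurableType d) (A : set Om) :
  measurable A -> forall b : bool, measurable [set w | `[< A w >] = b].
Proof.
move=> mA [].
  have -> : [set w | `[< A w >] = true] = A.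
    by apply/seteqP; split => w /=; case: asboolP => // nA /nA.
  exact: mA.
have -> : [set w | `[< A w >] = false] = ~` A.
  by apply/seteqP; split => w /=; case: asboolP => H; first [done | by move=> _ | by move/(_ H)].
exact: measurableC.
Qed.
Definition rect {dX} (X : measurableType dX) (Y : Type) (N : nat) : set (set ('I_N -> X * Y)) :=
  [set C | exists (A : 'I_N -> set X) (B : 'I_N -> set Y), (forall i, measurable (A i)) /\
     C = \bigcap_(i in [set: 'I_N]) [set z | A i (z i).1 /\ B i (z i).2]].

Lemma push_eq d (Omega : measurableType d) (R : realType) (P : probability Omega R)
  (dX : measure_display) (X : measurableType dX) (Y : finType) (N : nat)
  (Phi1 Phi2 : Omega -> g_sigma_algebraType (rect X (option Y) N)) :
  measurable_fun setT Phi1 -> measurable_fun setT Phi2 ->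
  (forall C, rect X (option Y) N C -> P (Phi1 @^-1` C) = P (Phi2 @^-1` C)) ->
  forall C : set (g_sigma_algebraType (rect X (option Y) N)), measurable C ->
  P (Phi1 @^-1` C) = P (Phi2 @^-1` C).
Proof.
move=> m1 m2 h C mC.
have := @measure_unique _ R (g_sigma_algebraType (rect X (option Y) N)) (rect X (option Y) N)
  (fun _ => setT) erefl _ _ _ (pushforward P Phi1) (pushforward P Phi2) h _ C mC.
apply.
all: try exact m1; try exact m2.
- move=> C1 C2 [A1 [B1 [mA1 ->]]] [A2 [B2 [mA2 ->]]].
  exists (fun i => A1 i `&` A2 i), (fun i => B1 i `&` B2 i); split.
    by move=> i; exact: measurableI.
  apply/seteqP; split => z /=.
    by move=> [h1 h2] i _; have [? ?] := h1 i I; have [? ?] := h2 i I.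
  by move=> hz; split => i _; have [[? ?] [? ?]] := hz i I.
- move=> _; exists (fun _ => setT), (fun _ => setT); split => //.
  by apply/seteqP; split => z //=.
- by apply/seteqP; split => // z _; exists 0%N.
- move=> _; rewrite /pushforward.
  apply: (le_lt_trans (probability_le1 P _) (ltry 1)).
  by rewrite -[X in measurable X]setTI; apply: m1.

Qed.

Lemma Phi_meas d (Omega : measurableType d)
  (dX : measure_display) (X : measurableType dX) (Y : finType) (N : nat)
  (x : 'I_N -> Omega -> X) (y : 'I_N -> Omega -> Y)
  (hxm : forall i, measurable_fun setT (x i))
  (hym : forall i l, measurable [set w | y i w = l]) (g : 'I_N -> 'I_N) :
  measurable_fun setT
    ((fun w j => (x (g j) w, Some (y (g j) w))) : Omega -> g_sigma_algebraType (rect X (option Y) N)).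
Proof.
apply: (@measurability _ _ Omega (g_sigma_algebraType (rect X (option Y) N)) setT _ (rect X (option Y) N) erefl).
move=> _ [C [A [B [mA ->]]] <-]; rewrite setTI.
have -> : (fun w j => (x (g j) w, Some (y (g j) w))) @^-1`
   (\bigcap_(i in [set: 'I_N]) [set z | A i (z i).1 /\ B i (z i).2]) =
   \bigcap_(i in [set: 'I_N]) ([set w | A i (x (g i) w)] `&` [set w | `[< B i (Some (y (g i) w)) >] ]).
  apply/seteqP; split => w /= h i _; have := h i I => /=.
    by case=> ? ?; split => //; apply/asboolP.
  by case=> ? /asboolP.
apply: fin_bigcapI => i; apply: measurableI.
  by rewrite -[X in measurable X]setTI; exact: hxm.
exact: (@fiber_meas _ _ _ _ (hym (g i)) (fun l => `[< B i (Some l) >] )).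

Qed.

Arguments Phi_meas {d Omega dX X Y N x y}.
Arguments push_eq {d Omega R P dX X Y N Phi1 Phi2}.

Lemma exch_ext d (Omega : measurableType d) (R : realType) (P : probability Omega R)
  (dX : measure_display) (X : measurableType dX) (Y : finType) (N : nat)
  (x : 'I_N -> Omega -> X) (y : 'I_N -> Omega -> Y)
  (hxm : forall i, measurable_fun setT (x i))
  (hym : forall i l, measurable [set w | y i w = l])
  (hexch : exchangeable P x y) (s : {perm 'I_N})
  (C : set (g_sigma_algebraType (rect X (option Y) N))) : measurable C ->
  P [set w | C (fun j => (x (s j) w, Some (y (s j) w)))] =
  P [set w | C (fun j => (x j w, Some (y j w)))].
Proof.
move=> mC.
apply: (push_eq (Phi_meas hxm hym s) (Phi_meas hxm hym id)) => // _ [A [B [mA ->]]].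
exact: (hexch s A (fun i l => B i (Some l)) mA).
Qed.

Lemma bigmin_meas d (T : measurableType d) (R : realType) (I : Type) (r : seq I)
  (P : pred I) (h : I -> T -> R) (x0 : R) :
  (forall i, measurable_fun setT (h i)) ->
  measurable_fun setT (fun w => \big[Num.min/x0]_(i <- r | P i) h i w).
Proof.
move=> mh; elim: r => [|a r IH].
  by under eq_fun do rewrite big_nil; exact: measurable_cst.
under eq_fun do rewrite big_cons.
by case: (P a) => //; exact: measurable_minr.
Qed.

Lemma ltr_fiber d (Om : measurableType d) (R : realType) (a b : Om -> R) :
  measurable_fun setT a -> measurable_fun setT b ->
  forall c : bool, measurable [set w | (a w < b w) = c].
Proof.
move=> ma mb c; have := measurable_fun_ltr ma mb measurableT (Y := [set c]) I.
by rewrite setTI.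
Qed.

Lemma proj1_meas {dX} (X : measurableType dX) (Y : finType) (N : nat) (j : 'I_N) :
  measurable_fun setT
    (fun z : g_sigma_algebraType (rect X (option Y) N) => (z j).1).
Proof.
move=> _ A mA; apply: sub_sigma_algebra.
exists (fun i => if i == j then A else setT), (fun _ => setT); split.
  by move=> i; case: ifP.
apply/seteqP; split => z /=.
  by move=> [_ Az] i _; case: ifP => [/eqP ->|].
by move=> h; split => //; have := h j I; rewrite eqxx; case.
Qed.

Lemma proj2_fiber {dX} (X : measurableType dX) (Y : finType) (N : nat) (j : 'I_N) t :
  measurable [set z : g_sigma_algebraType (rect X (option Y) N) | (z j).2 = t].
Proof.
apply: sub_sigma_algebra.
exists (fun _ => setT), (fun i => if i == j then [set t] else setT); split => //.
apply/seteqP; split => z /=.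
  by move=> zt i _; case: ifP => [/eqP ->|].
by move=> h; have := h j I; rewrite eqxx; case.
Qed.

Local Open Scope classical_set_scope.
Local Open Scope ring_scope.

Theorem theorem1 (d : measure_display) (Omega : measurableType d)
  (R : realType) (P : probability Omega R)
  (dX : measure_display) (X : measurableType dX) (Y : finType)
  (f : X -> Y -> R)
  (hf0 : forall x l, 0 <= f x l)
  (hf1 : forall x, \sum_(l : Y) f x l = 1)
  (hfm : forall l, measurable_fun setT (fun x => f x l))
  (n : nat)
  (x : 'I_n.+1 -> Omega -> X) (y : 'I_n.+1 -> Omega -> Y)
  (Sc : 'I_n -> Omega -> {set Y})
  (hxm : forall i, measurable_fun setT (x i))
  (hym : forall i l, measurable [set w | y i w = l])
  (hSm : forall j A, measurable [set w | Sc j w = A])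
  (hyS : forall j w, y (widen_ord (leqnSn n) j) w \in Sc j w)
  (hexch : exchangeable P x y)
  (eps : R) (heps : 0 < eps <= 1) :
  ((1 - eps)%:E <=
   P [set w | y ord_max w \in
        conf_set f (x ord_max w)
          (E_max f (fun j => x (widen_ord (leqnSn n) j) w) (fun j => Sc j w))
          eps])%E.
Proof.
move: heps => /andP[eps0 eps1].
set wid := widen_ord (leqnSn n).
set mx := (ord_max : 'I_n.+1).
set Em := fun w => E_max f (fun j => x (wid j) w) (fun j => Sc j w).
have szE w : size (Em w) = n by rewrite /Em /E_max size_map size_enum_ord.
set k := crit_index n eps.
have hk w : critical_score (Em w) eps = (if (k <= 0)%R then -oo%E
   else if (n < `|k|)%N then +oo%E else ((sort <=%R (Em w))`_(`|k|.-1))%:E).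
  by rewrite /critical_score szE.
set F := [set w | _].
case: (lerP k 0) => k0.
  apply: le_trans (measure_ge0 P F); rewrite lee_fin subr_le0.
  have := ceil_ge ((1 + n%:R) * (1 - eps)); rewrite -/(crit_index n eps) -/k.
  move=> h; have : (1 + n%:R) * (1 - eps) <= 0.
    by apply: (le_trans h); rewrite lerz0.
  rewrite pmulr_rle0; last by rewrite ltr_pwDl // ler0n.
  by rewrite subr_le0.
case: (ltnP n `|k|) => kn.
  have -> : F = setT.
    apply/seteqP; split => // w _; rewrite /F /= /conf_set finset.in_set -/(Em w) hk (lt_geF k0) kn.
    by rewrite /= leNye.
  by rewrite probability_setT lee_fin lerBlDr lerDl ltW.
set K := `|k|%N.
have kK : k = K%:Z by rewrite /K gez0_abs // ltW.
have K0 : (0 < K)%N by rewrite /K absz_gt0 gt_eqF.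
pose r i w := 1 - f (x i w) (y i w).
pose E i := [set w | (#|[set j : 'I_n.+1 | (r j w < r i w)%R]%SET| < K)%N].
pose rho (a : X) (ol : option Y) := if ol is Some l then 1 - f a l else 0.
pose Cm := [set z : g_sigma_algebraType (rect X (option Y) n.+1) |
   (#|[set j | (rho (z j).1 (z j).2 < rho (z mx).1 (z mx).2)%R]%SET| < K)%N].
have hCm : measurable Cm.
  pose D (z : g_sigma_algebraType (rect X (option Y) n.+1)) :=
    ([ffun j => (z j).2],
     [ffun q : 'I_n.+1 * option Y * option Y =>
        (rho (z q.1.1).1 q.1.2 < rho (z mx).1 q.2)%R]).
  pose H (q : {ffun 'I_n.+1 -> option Y} * {ffun 'I_n.+1 * option Y * option Y -> bool}) :=
    (#|[set j | q.2 (j, q.1 j, q.1 mx)]%SET| < K)%N.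
  have -> : Cm = [set z | H (D z)].
    have eH z : H (D z) = (#|[set j | (rho (z j).1 (z j).2 < rho (z mx).1 (z mx).2)%R]%SET| < K)%N.
      by rewrite /H /D /=; congr (_ < _)%N; apply: eq_card => j; rewrite !inE !ffunE.
    by apply/seteqP; split => z; rewrite /= eH.
  have mrho j ol : measurable_fun setT
      (fun z : g_sigma_algebraType (rect X (option Y) n.+1) => rho (z j).1 ol).
    case: ol => [l|]; last exact: measurable_cst.
    exact: (measurable_funB (measurable_cst _) (measurableT_comp (hfm l) (proj1_meas _ _ _ j))).
  apply: (@fiber_meas _ _ _ D); apply: pair_fiber.
    by apply: ffun_fiber => j t; exact: proj2_fiber.
  apply: ffun_fiber => q b; exact: ltr_fiber.
have hE i : E i = [set w | Cm (fun j => (x (tperm i mx j) w, Some (y (tperm i mx j) w)))].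
  have ec w : #|[set j | (r (tperm i mx j) w < r (tperm i mx mx) w)%R]%SET| =
              #|[set j | (r j w < r i w)%R]%SET|.
    rewrite tpermR -(card_preimset _ (@perm_inj _ (tperm i mx))).
    by apply: eq_card => j; rewrite !inE tpermK.
  by apply/seteqP; split => w; rewrite /E /Cm /= -ec.
have hEmx : E mx = [set w | Cm (fun j => (x j w, Some (y j w)))] by [].
have mE i : measurable (E i).
  rewrite hE; have := Phi_meas hxm hym (tperm i mx) measurableT Cm hCm.
  by rewrite setTI.
have PE i : P (E i) = P (E mx).
  by rewrite hE hEmx; apply: exch_ext.
have KN : (K <= n.+1)%N by apply: (leq_trans kn).
have key : ((K%:R)%:E <= \sum_(i < n.+1) P (E i))%E.
  have h1 : (\int[P]_(w in setT) (K%:R)%:E = (K%:R)%:E)%E.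
    rewrite integral_cst //; transitivity (((K%:R : R))%:E * 1)%E; last exact: mule1.
    by congr (_ * _)%E; exact: probability_setT.
  have h2 : (\int[P]_(w in setT) (\sum_(i < n.+1) (\1_(E i) w)%:E) =
            \sum_(i < n.+1) P (E i))%E.
    rewrite ge0_integral_sum //.
    - by apply: eq_bigr => i _; rewrite integral_indic // setIT.
    - by move=> i; apply/measurable_EFinP; exact: measurable_indic.
  rewrite -h1 -h2; apply: ge0_le_integral => //.
  - by apply: emeasurable_sum => i; apply/measurable_EFinP; exact: measurable_indic.
  move=> w _; rewrite sumEFin lee_fin.
  have -> : \sum_(i < n.+1) (\1_(E i) w : R) =
      (#|[set i : 'I_n.+1 | (#|[set j : 'I_n.+1 | (r j w < r i w)%R]| < K)%N]%SET|)%:R.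
    set A := [set i : 'I_n.+1 | _]%SET.
    transitivity ((\sum_(i < n.+1 | i \in A) (1:R))%R : R); last by rewrite sumr_const.
    rewrite [RHS]big_mkcond /=; apply: eq_bigr => i _.
    rewrite indicE /A finset.in_set; case: ifP => h; first by rewrite mem_set.
    suff -> : (w \in E i) = false by [].
    by apply/negbTE/negP => /set_mem; rewrite /E /= h.
  by rewrite ler_nat; exact: many_small.
have finE : P (E mx) \is a fin_num by apply: fin_num_measure.
set p := fine (P (E mx)).
have hp : P (E mx) = p%:E by rewrite fineK.
have Kp : (K%:R <= p *+ n.+1)%R.
  move: key; under eq_bigr do rewrite PE hp.
  by rewrite sumEFin sumr_const card_ord lee_fin.
have ep : (1 - eps <= p)%R.
  have := ceil_ge ((1 + n%:R) * (1 - eps)); rewrite -/(crit_index n eps) -/k kK.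
  move=> h; have h2 := le_trans h Kp.
  have e : (n.+1%:R : R) = 1 + n%:R by rewrite -[n.+1]add1n natrD.
  rewrite -[p *+ _]mulr_natr e in h2.
  have n0 : (0 <= n%:R :> R) by [].
  nra.
have Fchar w : (y mx w \in conf_set f (x mx w) (Em w) eps) =
    (#|[set j : 'I_n | (1 - min_on f (x (wid j) w) (Sc j w) < r mx w)%R]%SET| < K)%N.
  rewrite /conf_set finset.in_set hk (lt_geF k0) ltnNge kn /= -EFinB lee_fin.
  set q := _`_ _.
  have -> : (1 - q <= f (x mx w) (y mx w)) = (1 - f (x mx w) (y mx w) <= q).
    by apply/idP/idP => h; lra.
  rewrite /q sort_count; last by rewrite szE K0 kn.
  by rewrite /Em /E_max count_map cnt.
have FE : E mx `<=` F.
  move=> w Ew; rewrite /F /= Fchar; apply: leq_ltn_trans Ew.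
  have winj : injective wid by move=> a b h; apply/val_inj; exact: (congr1 val h).
  rewrite -(card_imset _ winj).
  apply: subset_leq_card; apply/fintype.subsetP => _ /imsetP[j jA ->].
  rewrite inE in jA; rewrite inE; apply: le_lt_trans jA.
  rewrite /r lerD2l lerN2 /min_on; apply: bigmin_le_mem; last exact: hyS.
  exact: mem_index_enum.
have mF : measurable F.
  pose D2 w := (y mx w, [ffun j => Sc j w],
     [ffun q : 'I_n * {set Y} * Y =>
        (1 - min_on f (x (wid q.1.1) w) q.1.2 < 1 - f (x mx w) q.2)%R]).
  pose H2 (q : Y * {ffun 'I_n -> {set Y}} * {ffun 'I_n * {set Y} * Y -> bool}) :=
    (#|[set j | q.2 (j, q.1.2 j, q.1.1)]%SET| < K)%N.
  have -> : F = [set w | H2 (D2 w)].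
    have eH w : H2 (D2 w) =
      (#|[set j : 'I_n | (1 - min_on f (x (wid j) w) (Sc j w) < r mx w)%R]%SET| < K)%N.
      by rewrite /H2 /D2 /=; congr (_ < _)%N; apply: eq_card => j; rewrite !inE !ffunE.
    by apply/seteqP; split => w; rewrite /F /= Fchar eH.
  apply: (@fiber_meas _ _ _ D2); apply: pair_fiber.
    apply: pair_fiber; first exact: hym.
    exact: ffun_fiber.
  apply: ffun_fiber => q b; apply: ltr_fiber.
    apply: measurable_funB; first exact: measurable_cst.
    rewrite /min_on; apply: bigmin_meas => l.
    exact: (measurableT_comp (hfm l) (hxm _)).
  apply: measurable_funB; first exact: measurable_cst.
  exact: (measurableT_comp (hfm _) (hxm _)).
apply: (le_trans _ (le_measure P _ _ FE)); rewrite ?inE //.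
apply: (@le_trans _ _ p%:E); first by rewrite lee_fin.
by rewrite /p fineK.
Qed.
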